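(* Let $D$ be a unique factorization domain and let $m$ be a nonzero element of $D$. Then $\tau_m=P_{J(m)}$, and consequently $\tau_m$ is a congruence on $D_{mult}$ such that the factor semigroup $D_{mult}/\tau_m$ satisfies Condition $( * )$.
   Context: $D_{mult}$ denotes the multiplicative semigroup of $D$; $e$ is the identity of $D$. For $a,b\in D$, $a\sim b$ means $a$ and $b$ are associates. $J(m)=mD$ is the ideal of $D$ generated by $m$ (it is also an ideal of $D_{mult}$). For $m\in D$, $\tau_m$ is the relation on $D$ given by $(a,b)\in\tau_m$ iff $\gcd(a,m)\sim\gcd(b,m)$. For a semigroup $S$, $H\subseteq S$ and $a\in S$, let $H\dots a=\{(x,y)\in S\times S: xay\in H\}$, and $P_H=\{(a,b)\in S\times S: H\dots a=H\dots b\}$ (the principal congruence defined by $H$); here $P_{J(m)}$ is computed in $S=D_{mult}$. For a commutative semigroup $S$ with zero $0$, $A(s)=\{x\in S: xs=0\}$. A semigroup $S$ satisfies Condition $( * )$ if: (1) $S$ is a commutative monoid with a zero; (2) $A(s)\neq\{0\}$ for every non-identity $s\in S$; (3) $A(s)=A(t)$ implies $s=t$ for all $s,t\in S$. *)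

(* Defs.v *)
From Stdlib Require Import ClassicalEpsilon.
From HB Require Import structures.
From mathcomp Require Import all_boot all_order all_algebra.
Set Implicit Arguments. Unset Strict Implicit. Unset Printing Implicit Defensive.
Import GRing.Theory.
Local Open Scope ring_scope.

Definition rdvd (D : idomainType) (a b : D) : Prop := exists c : D, b = c * a.

Definition assoc (D : idomainType) (a b : D) : Prop := rdvd a b /\ rdvd b a.

Definition irreducible_el (D : idomainType) (p : D) : Prop :=
  p != 0 /\ p \isn't a GRing.unit /\
  (forall a b : D, p = a * b -> a \is a GRing.unit \/ b \is a GRing.unit).

Definition is_UFD (D : idomainType) : Prop :=
  (forall a : D, a != 0 -> a \isn't a GRing.unit ->
     exists s : seq D, (forall x, x \in s -> irreducible_el x) /\
                       a = \prod_(x <- s) x) /\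
  (forall s t : seq D,
     (forall x, x \in s -> irreducible_el x) ->
     (forall x, x \in t -> irreducible_el x) ->
     \prod_(x <- s) x = \prod_(x <- t) x ->
     exists f : 'I_(size s) -> 'I_(size t),
       bijective f /\ forall i : 'I_(size s), assoc (nth 0 s i) (nth 0 t (f i))).

Definition is_gcd (D : idomainType) (g a b : D) : Prop :=
  rdvd g a /\ rdvd g b /\ (forall d, rdvd d a -> rdvd d b -> rdvd d g).

Definition tau (D : idomainType) (m : D) (a b : D) : Prop :=
  forall g1 g2 : D, is_gcd g1 a m -> is_gcd g2 b m -> assoc g1 g2.

Definition J (D : idomainType) (m : D) : D -> Prop := fun z => exists c, z = m * c.

Definition PH (S : Type) (mul : S -> S -> S) (H : S -> Prop) (a b : S) : Prop :=
  forall x y : S, H (mul (mul x a) y) <-> H (mul (mul x b) y).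

Definition is_congruence (S : Type) (R : S -> S -> Prop) (mul : S -> S -> S) : Prop :=
  (forall a, R a a) /\ (forall a b, R a b -> R b a) /\
  (forall a b c, R a b -> R b c -> R a c) /\
  (forall a b c, R a b -> R (mul c a) (mul c b) /\ R (mul a c) (mul b c)).

Definition qtype (S : Type) (R : S -> S -> Prop) : Type :=
  {C : S -> Prop | exists a, C = R a}.
Definition qclass (S : Type) (R : S -> S -> Prop) (a : S) : qtype R :=
  exist _ (R a) (ex_intro _ a erefl).
Definition qrep (S : Type) (R : S -> S -> Prop) (C : qtype R) : S :=
  proj1_sig (constructive_indefinite_description _ (proj2_sig C)).
Definition qop (S : Type) (R : S -> S -> Prop) (mul : S -> S -> S)
  (C1 C2 : qtype R) : qtype R := qclass R (mul (qrep C1) (qrep C2)).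

Definition annih (S : Type) (mul : S -> S -> S) (z s : S) : S -> Prop :=
  fun x => mul x s = z.
Definition cond_star (S : Type) (mul : S -> S -> S) : Prop :=
  exists e z : S,
    ((forall x y w, mul x (mul y w) = mul (mul x y) w) /\
     (forall x y, mul x y = mul y x) /\
     (forall x, mul e x = x /\ mul x e = x) /\
     (forall x, mul z x = z /\ mul x z = z)) /\
    (forall s, s <> e -> ~ (forall x, annih mul z s x <-> x = z)) /\
    (forall s t, (forall x, annih mul z s x <-> annih mul z t x) -> s = t).
Arguments qop {S} R mul.
Arguments qclass {S} R a.

(* Main.v *)
Require Import Defs.
From mathcomp Require Import all_boot all_order all_algebra.
From mathcomp Require Import ring.
From Stdlib Require Import Classical ProofIrrelevance FunctionalExtensionality PropExtensionality ClassicalEpsilon.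
Set Implicit Arguments. Unset Strict Implicit.
Import GRing.Theory.
Local Open Scope ring_scope.

Section S.
Variable D : idomainType.
Implicit Types a b c d x y : D.

Lemma dvd_refl x : rdvd x x. Proof. by exists 1; rewrite mul1r. Qed.
Lemma dvd_trans x y z : rdvd x y -> rdvd y z -> rdvd x z.
Proof. move=> [c ->] [d ->]; exists (d*c); ring. Qed.
Lemma dvd_mull x y z : rdvd x y -> rdvd x (z*y).
Proof. move=> [c ->]; exists (z*c); ring. Qed.
Lemma dvd_mulr x y z : rdvd x y -> rdvd x (y*z).
Proof. move=> [c ->]; exists (z*c); ring. Qed.
Lemma dvd0 x : rdvd x 0. Proof. by exists 0; rewrite mul0r. Qed.
Lemma dvd_unit u x : u \is a GRing.unit -> rdvd u x.
Proof. move=> hu; exists (x / u); by rewrite divrK. Qed.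
Lemma dvd_mul2l c x y : rdvd x y -> rdvd (c*x) (c*y).
Proof. move=> [k ->]; exists k; ring. Qed.
Lemma dvd_cancel c x y : c != 0 -> rdvd (c*x) (c*y) -> rdvd x y.
Proof.
move=> hc [k hk]; exists k; apply: (mulIf hc) => /=.
rewrite mulrC hk; ring.
Qed.

Lemma dvd_prod (s : seq D) x : x \in s -> rdvd x (\prod_(y <- s) y).
Proof.
elim: s => [//|y s IH]; rewrite inE big_cons => /orP [/eqP ->|/IH h].
  by apply: dvd_mulr; apply: dvd_refl.
by apply: dvd_mull.
Qed.

Lemma euclid (hD : is_UFD D) p x y : irreducible_el p -> rdvd p (x*y) ->
  rdvd p x \/ rdvd p y.
Proof.
move=> hp [z hz].
have [->|x0] := eqVneq x 0; first by left; apply dvd0.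
have [->|y0] := eqVneq y 0; first by right; apply dvd0.
case: (boolP (x \is a GRing.unit)) => xu.
  by right; exists (x^-1 * z); rewrite -mulrA -hz (mulKr xu).
case: (boolP (y \is a GRing.unit)) => yu.
  by left; exists (y^-1 * z); rewrite -mulrA -hz (mulrC x y) (mulKr yu).
have z0 : z != 0.
  apply/eqP => z0; move: hz; rewrite z0 mul0r => /eqP; rewrite mulf_eq0.
  by rewrite (negPf x0) (negPf y0).
have [hp0 [hpu hpirr]] := hp.
have [s [q [hs [hsq hpq]]]] : exists s q, (forall w, w \in q :: s -> irreducible_el w)
    /\ \prod_(w <- q::s) w = x*y /\ rdvd p q.
  case: (boolP (z \is a GRing.unit)) => zu.
    exists [::], (z * p); split; last split.
    - move=> w; rewrite inE => /eqP ->; split; first by rewrite mulf_neq0.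
      split; first by rewrite unitrM negb_and hpu orbT.
      move=> a b hab.
      have : p = (z^-1 * a) * b by rewrite -mulrA -hab (mulKr zu).
      move=> /hpirr [h|h]; last by right.
      left; have -> : a = z * (z^-1 * a) by rewrite mulrA (mulrV zu) mul1r.
      by rewrite unitrM zu h.
    - by rewrite big_cons big_nil mulr1 hz.
    - by apply: dvd_mull; apply: dvd_refl.
  have [sz [hsz ez]] := hD.1 z z0 zu.
  exists sz, p; split; last split.
  - move=> w; rewrite inE => /orP [/eqP ->//|]; exact: hsz.
  - by rewrite big_cons -ez hz mulrC.
  - exact: dvd_refl.
have [sx [hsx ex]] := hD.1 x x0 xu.
have [sy [hsy ey]] := hD.1 y y0 yu.
have hxy : forall w, w \in sx ++ sy -> irreducible_el w.
  by move=> w; rewrite mem_cat => /orP [/hsx|/hsy].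
have hpr : \prod_(w <- q :: s) w = \prod_(w <- sx ++ sy) w by rewrite hsq big_cat -ex -ey.
have [f [_ hf]] := hD.2 (q :: s) (sx ++ sy) hs hxy hpr.
have := hf (@ord0 (size s)) => /= [[hqw _]].
have hj : (f (@ord0 (size s)) < size (sx ++ sy))%N by [].
move: hqw (mem_nth 0 hj); set w := nth _ _ _ => hqw.
rewrite mem_cat => /orP [hw|hw].
  left; apply: (dvd_trans hpq); apply: (dvd_trans hqw); rewrite ex; exact: dvd_prod.
right; apply: (dvd_trans hpq); apply: (dvd_trans hqw); rewrite ey; exact: dvd_prod.
Qed.

Lemma Klem (hD : is_UFD D) (s : seq D) : (forall x, x \in s -> irreducible_el x) ->
  forall a, exists g, rdvd g a /\ rdvd g (\prod_(x <- s) x) /\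
    forall c, rdvd (\prod_(x <- s) x) (c * a) -> rdvd (\prod_(x <- s) x) (c * g).
Proof.
elim: s => [|p s IH] hs a.
  rewrite big_nil; exists 1; split; first by exists a; rewrite mulr1.
  split; first exact: dvd_refl.
  by move=> c _; apply: dvd_unit; rewrite unitr1.
have hp : irreducible_el p by apply: hs; rewrite inE eqxx.
have hs' : forall x, x \in s -> irreducible_el x.
  by move=> x hx; apply: hs; rewrite inE hx orbT.
have p0 : p != 0 by case: hp.
rewrite big_cons; set M := \prod_(x <- s) x.
case: (classic (rdvd p a)) => [[a' ea]|npa].
  have [g' [h1 [h2 h3]]] := IH hs' a'.
  exists (p * g'); split; last split.
  - rewrite ea; case: h1 => k ->; exists k; ring.
  - exact: dvd_mul2l.
  - move=> c hc.
    have : rdvd M (c * a').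
      apply: (dvd_cancel p0); move: hc; rewrite ea.
      have -> : c * (a' * p) = p * (c * a') by ring. done.
    move=> /h3 [t ht]; exists t; by rewrite mulrCA ht mulrCA.
have [g' [h1 [h2 h3]]] := IH hs' a.
exists g'; split; first done; split; first exact: dvd_mull.
move=> c hc.
have : rdvd p (c * a).
  apply: dvd_trans hc; apply: dvd_mulr; exact: dvd_refl.
move=> /(euclid hD hp) [[c' ec]|//].
have : rdvd M (c' * a).
  apply: (dvd_cancel p0); move: hc; rewrite ec.
  have -> : c' * p * a = p * (c' * a) by ring. done.
move=> /h3 [t ht]; exists t; by rewrite ec -mulrA mulrCA ht mulrCA.
Qed.

Lemma Kgen (hD : is_UFD D) m : m != 0 -> forall a, exists g, is_gcd g a m /\
  forall c, rdvd m (c * a) -> rdvd m (c * g).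
Proof.
move=> m0 a.
have [g [h1 [h2 h3]]] : exists g, rdvd g a /\ rdvd g m /\
    forall c, rdvd m (c * a) -> rdvd m (c * g).
  case: (boolP (m \is a GRing.unit)) => mu.
    exists 1; split; first by exists a; rewrite mulr1.
    by split; [exists m; rewrite mulr1 | move=> c _; exact: dvd_unit].
  have [s [hs es]] := hD.1 m m0 mu.
  rewrite es; exact: Klem.
exists g; split => //; split => //; split => // d [a' ea] [k ek].
have k0 : k != 0 by apply: contraNneq m0 => k0; rewrite ek k0 mul0r.
have : rdvd m (k * g) by apply: h3; exists a'; rewrite ea ek; ring.
rewrite {1}ek => -[t ht]; exists t; apply: (mulfI k0); rewrite ht; ring.
Qed.

Definition PH' m a b := forall c, rdvd m (c * a) <-> rdvd m (c * b).

Lemma half m a b h1 h2 : m != 0 -> PH' m a b -> is_gcd h1 a m -> is_gcd h2 b m -> rdvd h1 h2.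
Proof.
move=> m0 hP [[a' ea] [[k ek] _]] [_ [_ g2]].
have k0 : k != 0 by apply: contraNneq m0 => k0; rewrite ek k0 mul0r.
apply: g2; last by exists k.
have : rdvd m (k * b) by apply/hP; exists a'; rewrite ea ek; ring.
rewrite {1}ek => -[t ht]; exists t; apply: (mulfI k0); rewrite ht; ring.
Qed.

Lemma tauP (hD : is_UFD D) m a b : m != 0 -> tau m a b <-> PH' m a b.
Proof.
move=> m0; split.
  move=> ht.
  have [g1 [hg1 k1]] := Kgen hD m0 a.
  have [g2 [hg2 k2]] := Kgen hD m0 b.
  have [d12 d21] := ht g1 g2 hg1 hg2.
  move=> c; split.
    move=> /k1 h; apply: (dvd_trans h); apply: dvd_mul2l.
    apply: dvd_trans d12 _; exact: hg2.1.
  move=> /k2 h; apply: (dvd_trans h); apply: dvd_mul2l.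
  apply: dvd_trans d21 _; exact: hg1.1.
move=> hP g1 g2 hg1 hg2; split; first exact: half hP hg1 hg2.
by apply: half _ hg2 hg1 => // c; rewrite hP.
Qed.
End S.

Section Q.
Variable D : idomainType.
Hypothesis hD : is_UFD D.
Variable m : D.
Hypothesis hm : m != 0.
Local Notation R := (tau m).

Lemma PH'_refl a : PH' m a a. Proof. by []. Qed.
Lemma R_refl a : R a a. Proof. by apply/(tauP hD _ _ hm). Qed.
Lemma R_sym a b : R a b -> R b a.
Proof. by move=> /(tauP hD _ _ hm) h; apply/(tauP hD _ _ hm) => c; rewrite h. Qed.
Lemma R_trans a b c : R a b -> R b c -> R a c.
Proof.
move=> /(tauP hD _ _ hm) h1 /(tauP hD _ _ hm) h2; apply/(tauP hD _ _ hm) => d.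
by rewrite h1 h2.
Qed.
Lemma R_compat a b c : R a b -> R (c * a) (c * b) /\ R (a * c) (b * c).
Proof.
move=> /(tauP hD _ _ hm) h; split; apply/(tauP hD _ _ hm) => d.
  by rewrite !mulrA h.
by rewrite !mulrA -!(mulrC c) !mulrA h.
Qed.

Lemma R0 a : R a 0 <-> rdvd m a.
Proof.
rewrite (tauP hD _ _ hm); split.
  by move=> /(_ 1); rewrite !mul1r => h; apply/h; exact: dvd0.
move=> h c; rewrite mulr0; split => _; [exact: dvd0 | exact: dvd_mull].
Qed.

Lemma qeq a b : qclass R a = qclass R b <-> R a b.
Proof.
split.
  move=> /(f_equal (@proj1_sig _ _)) /= E; rewrite E; exact: R_refl.
move=> hab.
have E : R a = R b.
  apply: functional_extensionality => x; apply: propositional_extensionality.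
  split => h; [exact: R_trans (R_sym hab) h | exact: R_trans hab h].
rewrite /qclass; move: (ex_intro _ a _) (ex_intro _ b _); rewrite E => p1 p2.
by rewrite (proof_irrelevance _ p1 p2).
Qed.

Lemma qrepK (C : qtype R) : C = qclass R (qrep C).
Proof.
case: C => P pf; rewrite /qrep /=.
case: (constructive_indefinite_description _ pf) => a Ha /=.
subst P; rewrite /qclass.
by rewrite (proof_irrelevance _ pf (ex_intro _ a erefl)).
Qed.

Lemma qsurj (C : qtype R) : exists a, C = qclass R a.
Proof. by exists (qrep C); apply: qrepK. Qed.

Lemma qopE a b : qop R *%R (qclass R a) (qclass R b) = qclass R (a * b).
Proof.
rewrite /qop; apply/qeq.
have ha : R (qrep (qclass R a)) a by apply: R_sym; apply/qeq; apply: qrepK.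
have hb : R (qrep (qclass R b)) b by apply: R_sym; apply/qeq; apply: qrepK.
apply: R_trans (R_compat _ ha).2 _.
exact: (R_compat _ hb).1.
Qed.

End Q.

Theorem theorem3 (D : idomainType) (hD : is_UFD D) (m : D) (hm : m != 0) :
  (forall a b : D, tau m a b <-> PH *%R (J m) a b) /\
  is_congruence (tau m) *%R /\
  cond_star (qop (tau m) *%R).
Proof.
have JE : forall z, J m z <-> rdvd m z.
  by move=> z; split => -[c ->]; exists c; rewrite mulrC.
split.
  move=> a b; rewrite (tauP hD _ _ hm); split.
    move=> h x y; rewrite !JE.
    have -> : x * a * y = (x * y) * a by rewrite -mulrA (mulrC a) mulrA.
    have -> : x * b * y = (x * y) * b by rewrite -mulrA (mulrC b) mulrA.
    exact: h.
  move=> h c; have := h c 1; rewrite !mulr1 !JE; done.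
split.
  split; first exact: @R_refl _ hD m hm.
  split; first exact: @R_sym _ hD m hm.
  split; first exact: @R_trans _ hD m hm.
  exact: @R_compat _ hD m hm.
exists (qclass (tau m) 1), (qclass (tau m) 0).
split; [split; [|split; [|split]] | split].
- move=> x y w.
  have [a ->] := qsurj x; have [b ->] := qsurj y; have [c ->] := qsurj w.
  by rewrite !(qopE hD hm) mulrA.
- move=> x y; have [a ->] := qsurj x; have [b ->] := qsurj y.
  by rewrite !(qopE hD hm) mulrC.
- move=> x; have [a ->] := qsurj x.
  by rewrite !(qopE hD hm) mul1r mulr1.
- move=> x; have [a ->] := qsurj x.
  by rewrite !(qopE hD hm) mul0r mulr0.
- move=> s; have [a ->] := qsurj s => hne hall.
  have nR : ~ tau m a 1 by move=> h; apply: hne; apply/(qeq hD hm).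
  have [c hc] : exists c, ~ (rdvd m (c * a) <-> rdvd m (c * 1)).
    apply: NNPP => hn; apply: nR; apply/(tauP hD _ _ hm) => c.
    by apply: NNPP => hc; apply: hn; exists c.
  have [hca nc] : rdvd m (c * a) /\ ~ rdvd m c.
    rewrite mulr1 in hc; split.
      apply: NNPP => h1; apply: hc; split => // h2; exfalso; apply: h1.
      exact: dvd_mulr.
    by move=> h2; apply: hc; split => // _; apply: dvd_mulr.
  have : annih (qop (tau m) *%R) (qclass (tau m) 0) (qclass (tau m) a) (qclass (tau m) c).
    by rewrite /annih (qopE hD hm); apply/(qeq hD hm); apply/(R0 hD hm).
  move=> /hall /(qeq hD hm) /(R0 hD hm); exact: nc.
- move=> s t; have [a ->] := qsurj s; have [b ->] := qsurj t => h.
  apply/(qeq hD hm); apply/(tauP hD _ _ hm) => c.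
  have := h (qclass (tau m) c); rewrite /annih !(qopE hD hm).
  by rewrite !(qeq hD hm) !(R0 hD hm).
Qed.
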